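(* Let $p\ge 1$, let $n_1,\dots,n_p\ge1$ and $k_s\in[n_s]$ for each $s$. Suppose there is a maximum-size non-trivially intersecting family $\mathcal{F}\subseteq \prod_{s}\binom{[n_s]}{k_s}$ which is $Q$-shifted for some $Q\subsetneq [p]$ such that $k_t>1$ for some $t\notin Q$. Then there is a maximum-size non-trivially intersecting family $\mathcal{F}'\subseteq \prod_{s}\binom{[n_s]}{k_s}$ which is shifted.
   Context: Multi-part setting: the ground set is the disjoint union $\bigsqcup_{s=1}^p [n_s]$ of $p$ parts, $[n]=\{1,\dots,n\}$. For $F_s\subseteq[n_s]$, $\bigsqcup_s F_s$ denotes the subset having $F_s$ in part $s$; $\prod_{s}\binom{[n_s]}{k_s}$ is the collection of all $\bigsqcup_s F_s$ with $|F_s|=k_s$ for all $s$. A family is intersecting if any two of its sets intersect (in some part); trivially intersecting if some element (in some part) lies in all its sets; non-trivially intersecting if intersecting but not trivially intersecting. ''Maximum-size'' means of maximum size among all non-trivially intersecting subfamilies of $\prod_{s}\binom{[n_s]}{k_s}$. Shifting: for $t\in[p]$, $1\le i<j\le n_t$ and $F=\bigsqcup_s F_s$, $S_t^{i,j}(F)=F$ if $i\in F_t$ or $j\notin F_t$, and otherwise $S_t^{i,j}(F)$ replaces $F_t$ by $(F_t\setminus\{j\})\cup\{i\}$. For a family, $S_t^{i,j}(\mathcal F)=\{S_t^{i,j}(F):F\in\mathcal F\}\cup\{F: F\in\mathcal F,\ S_t^{i,j}(F)\in\mathcal F\}$. $\mathcal F$ is $t$-shifted if $S_t^{i,j}(\mathcal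 F)=\mathcal F$ for all $1\le i<j\le n_t$, and shifted if $t$-shifted for all $t\in[p]$. A non-trivially intersecting family $\mathcal F$ is $Q$-shifted (for $Q\subseteq[p]$) if it is $s$-shifted for each $s\in Q$, and for each $s\notin Q$ there are $1\le i_s<j_s\le n_s$ such that $S_s^{i_s,j_s}(\mathcal F)$ is trivially intersecting. *)

(* Defs.v *)
From mathcomp Require Import all_boot.
Set Implicit Arguments. Unset Strict Implicit. Unset Printing Implicit Defensive.

(* Ground set: disjoint union of p parts; part s is [n s], encoded as 'I_(n s)
   (elements 0..n s - 1 instead of 1..n s; the order is preserved). *)
Section MultiPart.
Variables (p : nat) (n : 'I_p -> nat).

Definition ground := {s : 'I_p & 'I_(n s)}.

Definition elt (s : 'I_p) (i : 'I_(n s)) : ground := Tagged (fun s => 'I_(n s)) i.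

Definition part (F : {set ground}) (s : 'I_p) : {set 'I_(n s)} :=
  [set i | elt i \in F].

Definition in_prod (k : 'I_p -> nat) (F : {set ground}) : bool :=
  [forall s, #|part F s| == k s].

Definition family_in_prod (k : 'I_p -> nat) (A : {set {set ground}}) : bool :=
  [forall F in A, in_prod k F].

Definition intersecting (A : {set {set ground}}) : Prop :=
  forall F G, F \in A -> G \in A -> F :&: G != set0.

Definition trivially_intersecting (A : {set {set ground}}) : Prop :=
  exists x : ground, forall F, F \in A -> x \in F.

Definition nontrivially_intersecting (A : {set {set ground}}) : Prop :=
  intersecting A /\ ~ trivially_intersecting A.

Definition max_nontriv (k : 'I_p -> nat) (A : {set {set ground}}) : Prop :=
  [/\ family_in_prod k A, nontrivially_intersecting A &
      forall B : {set {set ground}}, family_in_prod k B ->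
        nontrivially_intersecting B -> #|B| <= #|A| ].

Definition shift_set (t : 'I_p) (i j : 'I_(n t)) (F : {set ground}) : {set ground} :=
  if (i \in part F t) || (j \notin part F t) then F
  else elt i |: (F :\ elt j).

Definition shift_fam (t : 'I_p) (i j : 'I_(n t)) (A : {set {set ground}})
  : {set {set ground}} :=
  [set shift_set i j F | F in A] :|: [set F in A | shift_set i j F \in A].

Definition t_shifted (t : 'I_p) (A : {set {set ground}}) : Prop :=
  forall i j : 'I_(n t), i < j -> shift_fam i j A = A.

Definition shifted (A : {set {set ground}}) : Prop :=
  forall t : 'I_p, t_shifted t A.

Definition Q_shifted (Q : {set 'I_p}) (A : {set {set ground}}) : Prop :=
  [/\ nontrivially_intersecting A,
      forall s, s \in Q -> t_shifted s A &
      forall s, s \notin Q ->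
        exists i j : 'I_(n s), i < j /\ trivially_intersecting (shift_fam i j A)].

End MultiPart.

(* Main.v *)
Require Import Defs.
From mathcomp Require Import all_boot fingroup perm zify.
From Stdlib Require Import Classical.
Set Implicit Arguments. Unset Strict Implicit. Unset Printing Implicit Defensive.

Section Basics.
Variables (p : nat) (n : 'I_p -> nat).
Local Notation G := (ground n).

Lemma elt_eqE (s s' : 'I_p) (x : 'I_(n s)) (y : 'I_(n s')) :
  (elt x = elt y) <-> (s = s' /\ (x : nat) = y).
Proof.
split.
- move=> e; split; first exact: (congr1 (@tag _ _) e).
  exact: (congr1 (fun z : G => nat_of_ord (tagged z)) e).
- case=> es; subst s' => /val_inj -> //.
Qed.

Lemma elt_inj s : injective (@elt p n s).
Proof. by move=> x y /elt_eqE [_ /val_inj]. Qed.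

Lemma elt_neq s s' (x : 'I_(n s)) (y : 'I_(n s')) : s != s' -> (elt x == elt y) = false.
Proof. by move=> ne; apply/eqP => /elt_eqE [e _]; rewrite e eqxx in ne. Qed.

Lemma ground_eta (z : G) : z = elt (tagged z).
Proof. by case: z. Qed.

Lemma in_partE (F : {set G}) s (i : 'I_(n s)) : (i \in part F s) = (elt i \in F).
Proof. by rewrite inE. Qed.

Lemma set_ext_part (F E : {set G}) : (forall s, part F s = part E s) -> F = E.
Proof. by move=> H; apply/setP => z; rewrite (ground_eta z) -!in_partE H. Qed.

Definition exch s (a b : 'I_(n s)) (F : {set G}) : {set G} := elt a |: (F :\ elt b).

Lemma part_exch_neq s s' (a b : 'I_(n s)) F : s' != s -> part (exch a b F) s' = part F s'.
Proof. by move=> ne; apply/setP => y; rewrite !inE !elt_neq. Qed.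

Lemma part_exch_eq s (a b : 'I_(n s)) F : part (exch a b F) s = a |: (part F s :\ b).
Proof. by apply/setP => y; rewrite !inE !(inj_eq (@elt_inj s)). Qed.

Lemma in_prod_exch k s (a b : 'I_(n s)) F :
  in_prod k F -> elt b \in F -> elt a \notin F -> in_prod k (exch a b F).
Proof.
move=> /forallP H bF aF; apply/forallP => s'.
case: (eqVneq s' s) => [->|ne]; last by rewrite part_exch_neq // H.
rewrite part_exch_eq cardsU1 !inE ?in_partE (negbTE aF) andbF /=.
have := H s; rewrite (cardsD1 b) ?in_partE ?inE bF.

by [].
Qed.

Lemma shift_setE s (i j : 'I_(n s)) F :
  shift_set i j F = if (elt i \in F) || (elt j \notin F) then F else exch i j F.
Proof. by rewrite /shift_set !in_partE. Qed.


Section Shift.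
Variables (s : 'I_p) (i j : 'I_(n s)).
Local Notation S := (shift_set i j).

Lemma shift_set_id F : S (S F) = S F.
Proof.
rewrite [S F]shift_setE; case: ifP => [c|/negbT /norP [iF jF]].
  by rewrite shift_setE c.
by rewrite shift_setE /exch !inE eqxx.
Qed.

Lemma shift_set_ne F : S F != F -> [/\ elt i \notin F, elt j \in F & S F = exch i j F].
Proof.
rewrite shift_setE; case: ifP => [_|/negbT /norP [iF /negbNE jF] _]; first by rewrite eqxx.
by [].
Qed.

Lemma in_prod_shift k F : in_prod k F -> in_prod k (S F).
Proof.
move=> H; case: (eqVneq (S F) F) => [->//|/shift_set_ne [iF jF ->]].
exact: in_prod_exch.
Qed.

Definition phi (A : {set {set G}}) F := if S F \in A then F else S F.

Lemma shift_famE (A : {set {set G}}) : shift_fam i j A = [set phi A F | F in A].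
Proof.
apply/setP => X; rewrite /shift_fam !inE; apply/idP/idP.
- case/orP => [/imsetP [F FA ->] | /andP [XA SXA]].
  + case: (boolP (S F \in A)) => SFA.
    * by apply/imsetP; exists (S F) => //; rewrite /phi shift_set_id SFA.
    * by apply/imsetP; exists F => //; rewrite /phi (negbTE SFA).
  + by apply/imsetP; exists X => //; rewrite /phi SXA.
- case/imsetP => F FA ->; rewrite /phi; case: ifP => SFA.
  + by apply/orP; right; rewrite FA SFA.
  + by apply/orP; left; apply/imsetP; exists F.
Qed.

Lemma exch_inv (F : {set G}) : elt i \notin F -> elt j \in F -> elt j |: (exch i j F :\ elt i) = F.
Proof.
move=> iF jF; apply/setP => x; rewrite /exch !inE.
case: (eqVneq x (elt j)) => [->//|xj] /=.
case: (eqVneq x (elt i)) => [->|xi] //=; by rewrite (negbTE iF).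
Qed.

Lemma phi_inj (A : {set {set G}}) : {in A &, injective (phi A)}.
Proof.
move=> F E FA EA; rewrite /phi; case: ifP => SFA; case: ifP => SEA.
- done.
- by move=> eF; rewrite -eF FA in SEA.
- by move=> eS; rewrite eS EA in SFA.
- move=> eS.
  have nF : S F != F by apply/eqP => e; rewrite e FA in SFA.
  have nE : S E != E by apply/eqP => e; rewrite e EA in SEA.
  case/shift_set_ne: nF => iF jF eF; case/shift_set_ne: nE => iE jE eE.
  by rewrite -(exch_inv iF jF) -(exch_inv iE jE) -eF -eE eS.
Qed.

Lemma card_shift (A : {set {set G}}) : #|shift_fam i j A| = #|A|.
Proof. by rewrite shift_famE card_in_imset //; exact: phi_inj. Qed.

Lemma mem_shift_fam (A : {set {set G}}) X : X \in shift_fam i j A ->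
  (exists2 F, F \in A & X = S F) \/ (X \in A /\ S X \in A).
Proof.
rewrite /shift_fam inE => /orP [/imsetP [F FA ->]|]; first by left; exists F.
by rewrite inE => /andP [] ? ?; right.
Qed.

Lemma S_in_shift (A : {set {set G}}) F : F \in A -> S F \in shift_fam i j A.
Proof. by move=> FA; rewrite /shift_fam inE imset_f. Qed.

Lemma kept_in_shift (A : {set {set G}}) F : F \in A -> S F \in A -> F \in shift_fam i j A.
Proof. by move=> FA SFA; rewrite /shift_fam !inE FA SFA orbT. Qed.

Lemma fam_prod_shift k (A : {set {set G}}) : family_in_prod k A -> family_in_prod k (shift_fam i j A).
Proof.
move=> /forall_inP H; apply/forall_inP => X /mem_shift_fam [[F FA ->]|[XA _]].
- by apply: in_prod_shift; apply: H.
- exact: H.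
Qed.

Lemma shift_fixed (A : {set {set G}}) F : shift_fam i j A = A -> F \in A -> S F \in A.
Proof. by move=> e FA; rewrite -e; exact: S_in_shift. Qed.

Lemma memS1 (F : {set G}) x : x \in F -> x != elt j -> x \in S F.
Proof.
move=> xF xj; rewrite shift_setE; case: ifP => // _.
by rewrite /exch !inE xj xF orbT.
Qed.

Lemma memS2 (F : {set G}) : elt j \in F -> elt i \in S F.
Proof.
move=> jF; rewrite shift_setE; case: ifP => [/orP [//|]|_].
- by rewrite jF.
- by rewrite /exch !inE eqxx.
Qed.

Lemma inter_SS (F E : {set G}) : F :&: E != set0 -> S F :&: S E != set0.
Proof.
case/set0Pn => x; rewrite inE => /andP [xF xE].
case: (eqVneq x (elt j)) => [xj|xj].
- by apply/set0Pn; exists (elt i); rewrite inE !memS2 -?xj.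
- by apply/set0Pn; exists x; rewrite inE !memS1.
Qed.

Lemma inter_KS (A : {set {set G}}) F E : intersecting A -> F \in A -> S F \in A -> E \in A ->
  F :&: S E != set0.
Proof.
move=> IA FA SFA EA.
case: (eqVneq (S E) E) => [->|]; first exact: IA.
case/shift_set_ne => iE jE eE.
case/set0Pn: (IA F E FA EA) => x; rewrite inE => /andP [xF xE].
case: (eqVneq x (elt j)) => [xj|xj]; last first.
  by apply/set0Pn; exists x; rewrite inE xF memS1.
case: (boolP (elt i \in F)) => iF.
  by apply/set0Pn; exists (elt i); rewrite inE iF memS2.
have jF : elt j \in F by rewrite -xj.
have eF : S F = exch i j F by rewrite shift_setE (negbTE iF) jF.
case/set0Pn: (IA _ _ SFA EA) => y; rewrite inE eF /exch !inE => /andP [].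
case/orP => [/eqP -> | /andP [yj yF] yE]; first by rewrite (negbTE iE).
by apply/set0Pn; exists y; rewrite inE yF memS1.
Qed.

Lemma inter_shift (A : {set {set G}}) : intersecting A -> intersecting (shift_fam i j A).
Proof.
move=> IA X Y /mem_shift_fam [[F FA ->]|[XA SXA]] /mem_shift_fam [[E EA ->]|[YA SYA]].
- exact/inter_SS/IA.
- by rewrite setIC; exact: (inter_KS IA YA SYA FA).
- exact: (inter_KS IA XA SXA EA).
- exact: IA.
Qed.

Lemma triv_shift (A : {set {set G}}) x : ~ trivially_intersecting A ->
  (forall X, X \in shift_fam i j A -> x \in X) ->
  [/\ x = elt i, forall F, F \in A -> elt i \in S F &
      forall F, F \in A -> S F \in A -> elt i \in F].
Proof.
move=> NT H.
case: (boolP [exists G in A, x \notin G]) => [/exists_inP [G GA xG]|/exists_inPn H2];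
  last by case: NT; exists x => F /H2; rewrite negbK.
have xSG := H _ (S_in_shift GA).
have nG : S G != G by apply/eqP => e; rewrite e (negbTE xG) in xSG.
case/shift_set_ne: nG => iG jG eG.
move: xSG; rewrite eG /exch !inE (negbTE xG) andbF orbF => /eqP ex.
subst x; split => // F FA; last by move=> SFA; apply: H; exact: kept_in_shift.
by apply: H; exact: S_in_shift.
Qed.

Definition w (F : {set G}) := \sum_(z in F) (tagged z : nat).
Definition pot (A : {set {set G}}) := \sum_(F in A) w F.

Lemma w_exch (a b : 'I_(n s)) (F : {set G}) : elt b \in F -> elt a \notin F -> w (exch a b F) + b = w F + a.
Proof.
move=> bF aF; rewrite /w /exch big_setU1 /=; last by rewrite !inE (negbTE aF) andbF.
rewrite [X in _ = X + _](big_setD1 (elt b)) //=.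
set X := \sum_(_ in _) _; move: X => X; lia.
Qed.

Lemma w_S_lt (F : {set G}) : i < j -> S F != F -> w (S F) < w F.
Proof.
move=> lt ne; case/shift_set_ne: (ne) => iF jF eF.
have := w_exch jF iF; rewrite -eF; lia.
Qed.

Lemma w_S_le (F : {set G}) : i < j -> w (S F) <= w F.
Proof.
move=> lt; case: (eqVneq (S F) F) => [->//|ne].
by apply: ltnW; apply: w_S_lt.
Qed.

Lemma pot_shift (A : {set {set G}}) : i < j -> shift_fam i j A != A -> pot (shift_fam i j A) < pot A.
Proof.
move=> lt ne; rewrite /pot shift_famE big_imset /=; last exact: phi_inj.
have [F0 F0A nF0]: exists2 F0, F0 \in A & phi A F0 != F0.
  case: (boolP [exists F in A, phi A F != F]) => [/exists_inP [F FA nF]|/exists_inPn H2].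
    by exists F.
  case/negP: ne; rewrite shift_famE (eq_in_imset (g := id)) ?imset_id //.
  by move=> F /H2 /negPn /eqP.
have le1 : forall F, w (phi A F) <= w F.
  by move=> F; rewrite /phi; case: ifP => // _; apply: w_S_le.
have lt0 : w (phi A F0) < w F0.
  move: nF0; rewrite /phi; case: ifP; first by rewrite eqxx.
  by move=> _ nS; apply: w_S_lt.
rewrite (bigD1 F0) //= [X in _ < X](bigD1 F0) //=.
have : \sum_(F in A | F != F0) w (phi A F) <= \sum_(F in A | F != F0) w F.
  by apply: leq_sum => F _; apply: le1.
by move=> h; rewrite -addSn; exact: leq_add lt0 h.
Qed.

End Shift.

Section Swap.
Variables (t : 'I_p) (a b : 'I_(n t)).
Local Notation pi := (tperm (elt a) (elt b)).

Lemma pi_elt_neq s (y : 'I_(n s)) : s != t -> pi (elt y) = elt y.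
Proof. by move=> ne; rewrite tpermD // eq_sym elt_neq. Qed.

Lemma pi_elt_eq (y : 'I_(n t)) : pi (elt y) = elt (tperm a b y).
Proof.
case: (tpermP a b y) => [->|->|ya yb]; rewrite ?tpermL ?tpermR //.
rewrite tpermD //; apply/eqP => /elt_inj e; [exact: ya | exact: yb].
Qed.

Lemma mem_pi (F : {set G}) z : (z \in pi @: F) = (pi z \in F).
Proof. by rewrite -{1}(tpermK (elt a) (elt b) z) mem_imset //; exact: perm_inj. Qed.

Lemma in_prod_pi k (F : {set G}) : in_prod k F -> in_prod k (pi @: F).
Proof.
move=> /forallP H; apply/forallP => s; rewrite -(eqP (H s)).
case: (eqVneq s t) => [->|ne].
- have -> : part (pi @: F) t = tperm a b @^-1: part F t.
    by apply/setP => y; rewrite !inE mem_pi pi_elt_eq.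
  by rewrite card_preimset //; exact: perm_inj.
- have -> // : part (pi @: F) s = part F s.
  by apply/setP => y; rewrite !inE mem_pi pi_elt_neq.
Qed.

Definition piA (A : {set {set G}}) : {set {set G}} := [set pi @: F | F : {set G} in A].

Lemma max_pi k (A : {set {set G}}) : max_nontriv k A -> max_nontriv k (piA A).
Proof.
case=> FP [IA NT] MX; split.
- apply/forall_inP => X /imsetP [F FA ->]; apply: in_prod_pi.
  exact: (forall_inP FP).
- split.
  + move=> X Y /imsetP [F FA ->] /imsetP [E EA ->].
    rewrite -imsetI; last by move=> x y _ _; exact: perm_inj.
    by rewrite imset_eq0; apply: IA.
  + case=> x Hx; apply: NT; exists (pi x) => F FA.
    by rewrite -mem_pi; apply: Hx; apply: imset_f.
- move=> B FB NB; rewrite card_imset; first exact: MX.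
  by apply: imset_inj; exact: perm_inj.
Qed.

Definition meets (x y : G) (A : {set {set G}}) := forall F, F \in A -> (x \in F) || (y \in F).

Lemma meets_pi x y (A : {set {set G}}) : meets x y A -> meets (pi x) (pi y) (piA A).
Proof.
move=> H X /imsetP [F FA ->]; rewrite !mem_pi !tpermK; exact: H.
Qed.

End Swap.

Lemma exists_subset (T : finType) (I E : {set T}) m :
  [disjoint I & E] -> #|I| <= m -> m + #|E| <= #|T| ->
  exists X : {set T}, [/\ I \subset X, [disjoint X & E] & #|X| = m].
Proof.
move=> dIE le1 le2.
have main : forall d (I' : {set T}), I \subset I' -> [disjoint I' & E] -> #|I'| + d = m ->
  exists X : {set T}, [/\ I \subset X, [disjoint X & E] & #|X| = m].
  elim=> [|d IH] I' sI dI e; first by exists I'; rewrite -e addn0.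
  have : #|I' :|: E| < #|T|.
    have := leq_card_setU I' E; case=> h _; apply: leq_trans _ le2; lia.
  rewrite (cardsCs (I' :|: E)) => h.
  have : ~: (I' :|: E) != set0.
    by apply/negP => /eqP e0; rewrite e0 cards0 subn0 ltnn in h.
  case/set0Pn => z; rewrite !inE negb_or => /andP [zI zE].
  apply: (IH (z |: I')).
  - by apply: subset_trans sI _; apply: subsetUr.
  - rewrite -setI_eq0; apply/set0Pn => [[x]]; rewrite !inE => /andP [/orP [/eqP ->|xI] xE].
      by rewrite xE in zE.
    by move: dI; rewrite -setI_eq0 => /set0Pn; apply; exists x; rewrite inE xI xE.
  - by rewrite cardsU1 zI; lia.
by apply: (main (m - #|I|) I) => //; lia.
Qed.

Lemma diff_elems (T : finType) (X Y : {set T}) : #|X| = #|Y| -> X != Y ->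
  (exists2 c, c \in X & c \notin Y) /\ (exists2 d, d \in Y & d \notin X).
Proof.
move=> e ne; split; apply/subsetPn; apply: contra ne => sub.
- by rewrite eqEcard sub e leqnn.
- by rewrite eq_sym eqEcard sub e leqnn.
Qed.

Lemma build (P : forall s, pred {set 'I_(n s)}) : (forall s, exists X, P s X) ->
  exists F : {set G}, forall s, P s (part F s).
Proof.
move=> H; exists [set z : G | tagged z \in xchoose (H (tag z))] => s.
have -> : part [set z : G | tagged z \in xchoose (H (tag z))] s = xchoose (H s).
  by apply/setP => y; rewrite !inE.
exact: xchooseP.
Qed.

Section Main.
Variables (k : 'I_p -> nat) (t : 'I_p) (o0 o1 : 'I_(n t)).
Hypotheses (h0 : (o0 : nat) = 0) (h1 : (o1 : nat) = 1) (kt : 1 < k t) (kn : forall s, k s <= n s).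
Local Notation u := (elt o0).
Local Notation v := (elt o1).

Lemma elt_u s (y : 'I_(n s)) : elt y = u -> (y : nat) = 0.
Proof. by move/elt_eqE => [_ ->]; rewrite h0. Qed.

Lemma elt_v s (y : 'I_(n s)) : elt y = v -> s = t /\ (y : nat) = 1.
Proof. by move/elt_eqE => [es ey]; split => //; rewrite ey h1. Qed.

Lemma uv_neq : u != v.
Proof. by apply/eqP => /elt_inj /(congr1 val) /=; rewrite h0 h1. Qed.

Lemma meets_shift s (a b : 'I_(n s)) (A : {set {set G}}) :
  a < b -> meets u v A -> meets u v (shift_fam a b A).
Proof.
move=> lt H X /mem_shift_fam [[F FA ->]|[XA _]]; last exact: H.
case: (eqVneq (shift_set a b F) F) => [->|]; first exact: H.
case/shift_set_ne => aF bF ->; rewrite /exch !inE.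
have bu : elt b != u by apply/eqP => /elt_u e; rewrite e in lt.
have bu' : (u == elt b) = false by rewrite eq_sym (negbTE bu).
case/orP: (H F FA) => [uF|vF]; first by rewrite uF bu' /= orbT.
case: (eqVneq (elt b) v) => [ebv|bv]; last first.
  have bv' : (v == elt b) = false by rewrite eq_sym (negbTE bv).
  by rewrite ?bv' ?vF /= ?orbT.
case: (elt_v ebv) => est eb.
have ea : elt a = u by apply/elt_eqE; split => //; rewrite h0; lia.
by rewrite ea eqxx.
Qed.

Lemma T_sub (A : {set {set G}}) F : max_nontriv k A -> meets u v A ->
  in_prod k F -> u \in F -> v \in F -> F \in A.
Proof.
case=> FP [IA NT] MX M PF uF vF.
have : #|F |: A| <= #|A|.
  apply: MX.
  - apply/forall_inP => X /setU1P [->//|XA]; exact: (forall_inP FP).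
  - split.
    + have HF : forall Y, Y \in A -> F :&: Y != set0.
        move=> Y YA; apply/set0Pn; case/orP: (M Y YA) => [uY|vY];
          [exists u|exists v]; by rewrite inE ?uF ?vF.
      move=> X Y /setU1P [->|XA] /setU1P [->|YA].
      * by apply/set0Pn; exists u; rewrite inE uF.
      * exact: HF.
      * by rewrite setIC; apply: HF.
      * exact: IA.
    + case=> x Hx; apply: NT; exists x => Y YA; by apply: Hx; rewrite !inE YA orbT.
by rewrite cardsU1; case: (F \in A) => //=; rewrite add1n ltnn.
Qed.

Lemma construct s (a : 'I_(n s)) : k s < n s -> elt a != u -> elt a != v ->
  exists F, [/\ in_prod k F, u \in F, v \in F & elt a \notin F].
Proof.
move=> ksn au av.
pose I s' := [set y : 'I_(n s') | (elt y == u) || (elt y == v)].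
pose E s' := [set y : 'I_(n s') | elt y == elt a].
have H : forall s', exists X : {set 'I_(n s')},
    [&& #|X| == k s', I s' \subset X & [disjoint X & E s']].
  move=> s'.
  have dIE : [disjoint I s' & E s'].
    rewrite -setI_eq0; apply/set0Pn => [[y]]; rewrite !inE => /andP [/orP [] /eqP -> /eqP e].
    + by rewrite e eqxx in au.
    + by rewrite e eqxx in av.
  have cI : #|I s'| <= k s'.
    case: (eqVneq s' t) => [es|ne].
    - subst s'; apply: leq_trans _ kt.
      have : I t \subset [set o0; o1].
        by apply/subsetP => y; rewrite !inE !(inj_eq (@elt_inj t)).
      move/subset_leq_card; rewrite cards2 => h; apply: leq_trans h _.
      by case: (o0 != o1).
    - have -> : I s' = set0 by apply/setP => y; rewrite !inE !elt_neq.
      by rewrite cards0.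
  have cE : k s' + #|E s'| <= #|'I_(n s')|.
    rewrite card_ord; case: (eqVneq s' s) => [es|ne].
    - subst s'.
      have -> : E s = [set a] by apply/setP => y; rewrite !inE (inj_eq (@elt_inj s)).
      by rewrite cards1 addn1.
    - have -> : E s' = set0 by apply/setP => y; rewrite !inE elt_neq.
      by rewrite cards0 addn0.
  have [X [sX dX cX]] := exists_subset dIE cI cE.
  by exists X; rewrite sX dX cX eqxx.
have [F HF] := build (P := fun s' X => [&& #|X| == k s', I s' \subset X & [disjoint X & E s']]) H.
exists F; split.
- by apply/forallP => s'; case/and3P: (HF s').
- have := HF t; case/and3P => _ /subsetP sub _; rewrite -in_partE; apply: sub.
  by rewrite !inE eqxx.
- have := HF t; case/and3P => _ /subsetP sub _; rewrite -in_partE; apply: sub.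
  by rewrite !inE eqxx orbT.
- have := HF s; case/and3P => _ _ dX; rewrite -in_partE; apply/negP => aF.
  by move: dX; rewrite -setI_eq0 => /set0Pn; apply; exists a; rewrite in_setI aF inE eqxx.
Qed.

Lemma nontriv_shift (A : {set {set G}}) s (a b : 'I_(n s)) :
  max_nontriv k A -> meets u v A -> a < b -> ~ (elt a = u /\ elt b = v) ->
  shift_fam a b A != A -> ~ trivially_intersecting (shift_fam a b A).
Proof.
move=> MA M lt nuv ne [x Hx].
have MA' := MA; case: MA' => FP [IA NT] MX.
have [ex Hi Hk] := triv_shift NT Hx.
have bu : elt b != u by apply/eqP => /elt_u e; rewrite e in lt.
have ab : elt a != elt b by apply/eqP => /elt_inj e; rewrite e ltnn in lt.
case: (boolP ((elt a == u) || (elt a == v))) => [auv|].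
- have bv : elt b != v.
    apply/eqP => ebv; case/orP: auv => /eqP eau; first by apply: nuv.
    by move: ab; rewrite eau ebv eqxx.
  have [F FA aF] : exists2 F, F \in A & elt a \notin F.
    case: (boolP [exists F in A, elt a \notin F]) => [/exists_inP [F FA aF]|/exists_inPn H2].
      by exists F.
    by case: NT; exists (elt a) => F /H2; rewrite negbK.
  have nS : shift_set a b F != F.
    by apply/eqP => e; move: (Hi F FA); rewrite e (negbTE aF).
  have PS : in_prod k (shift_set a b F) by apply: in_prod_shift; exact: (forall_inP FP).
  have uS : u \in shift_set a b F.
    case: (eqVneq (elt a) u) => [eau|nau]; first by rewrite -eau; exact: Hi.
    have eav : elt a = v by move: auv; rewrite (negbTE nau) /= => /eqP.
    apply: memS1; last by rewrite eq_sym.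
    by move: (M F FA); rewrite -eav (negbTE aF) orbF.
  have vS : v \in shift_set a b F.
    case: (eqVneq (elt a) v) => [eav|nav]; first by rewrite -eav; exact: Hi.
    have eau : elt a = u by move: auv; rewrite (negbTE nav) orbF => /eqP.
    apply: memS1; last by rewrite eq_sym.
    by move: (M F FA); rewrite -eau (negbTE aF).
  have SA := T_sub MA M PS uS vS.
  by move: (Hk F FA SA); rewrite (negbTE aF).
- rewrite negb_or => /andP [au av].
  have bv : elt b != v.
    apply/eqP => /elt_v [est eb]; case/negP: au; apply/eqP/elt_eqE; split => //.
    rewrite h0; lia.
  have [G0 G0A nG] : exists2 G0, G0 \in A & shift_set a b G0 != G0.
    case: (boolP [exists G0 in A, shift_set a b G0 != G0]) => [/exists_inP [G0 ? ?]|/exists_inPn H2].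
      by exists G0.
    case/negP: ne; rewrite shift_famE (eq_in_imset (g := id)) ?imset_id //.
    move=> F FA /=; rewrite /phi; case: ifP => // _; exact/eqP/negPn/H2.
  have [aG _ _] := shift_set_ne nG.
  have ksn : k s < n s.
    have : part G0 s \proper [set: 'I_(n s)].
      apply/properP; split; first exact: subsetT.
      by exists a; rewrite ?inE.
    move/proper_card; rewrite cardsT card_ord.
    by rewrite (eqP (forallP (forall_inP FP _ G0A) s)).
  have [F [PF uF vF aF]] := construct ksn au av.
  have FA := T_sub MA M PF uF vF.
  have PS : in_prod k (shift_set a b F) by apply: in_prod_shift.
  have SA : shift_set a b F \in A.
    by apply: T_sub => //; apply: memS1 => //; rewrite eq_sym.
  by move: (Hk F FA SA); rewrite (negbTE aF).
Qed.

Lemma last_case (A : {set {set G}}) s (a b : 'I_(n s)) :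
  max_nontriv k A -> meets u v A ->
  (forall s' (c d : 'I_(n s')), c < d -> ~ (elt c = u /\ elt d = v) -> shift_fam c d A = A) ->
  elt a = u -> elt b = v -> ~ trivially_intersecting (shift_fam a b A).
Proof.
move=> MA M H ea eb [x Hx].
have MA' := MA; case: MA' => FP [IA NT] MX.
have [ex Hi Hk] := triv_shift NT Hx.
have PA : forall F, F \in A -> in_prod k F by move=> F FA; exact: (forall_inP FP).
suff [F [FA uF SA]] : exists F, [/\ F \in A, u \notin F & shift_set a b F \in A].
  by move: (Hk F FA SA); rewrite ea (negbTE uF).
have [F0 F0A uF0] : exists2 F, F \in A & u \notin F.
  case: (boolP [exists F in A, u \notin F]) => [/exists_inP [F FA aF]|/exists_inPn H2].
    by exists F.
  by case: NT; exists u => F /H2; rewrite negbK.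
have [E0 E0A vE0] : exists2 F, F \in A & v \notin F.
  case: (boolP [exists F in A, v \notin F]) => [/exists_inP [F FA aF]|/exists_inPn H2].
    by exists F.
  by case: NT; exists v => F /H2; rewrite negbK.
have vS : forall F : {set G}, v \notin u |: (F :\ v).
  by move=> F; rewrite !inE eqxx /= orbF eq_sym uv_neq.
suff main : forall d F E, #|F :\: E| = d -> F \in A -> u \notin F -> E \in A -> v \notin E ->
    exists F, [/\ F \in A, u \notin F & shift_set a b F \in A].
  exact: (main _ F0 E0 erefl F0A uF0 E0A vE0).
elim/ltn_ind => d IH F E ed FA uF EA vE.
have vF : v \in F by move: (M F FA); rewrite (negbTE uF).
have uE : u \in E by move: (M E EA); rewrite (negbTE vE) orbF.
have eS : shift_set a b F = u |: (F :\ v) by rewrite shift_setE /exch ea eb (negbTE uF) vF.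
case: (eqVneq (shift_set a b F) E) => [eSE|nSE]; first by exists F; split => //; rewrite eSE.
have [s' nps] : exists s', part (shift_set a b F) s' != part E s'.
  case: (boolP [exists s', part (shift_set a b F) s' != part E s']) => [/existsP [s' h]|/existsPn H2].
    by exists s'.
  by case/negP: nSE; apply/eqP/set_ext_part => s'; exact/eqP/negPn/H2.
have PSF : in_prod k (shift_set a b F) by apply: in_prod_shift; apply: PA.
have ecard : #|part (shift_set a b F) s'| = #|part E s'|.
  by rewrite (eqP (forallP PSF s')) (eqP (forallP (PA E EA) s')).
have [[c cS cE] [d' dE dS]] := diff_elems ecard nps.
rewrite !in_partE in cS cE dE dS.
rewrite eS in cS dS.
have cu : elt c != u by apply/eqP => e; rewrite e uE in cE.
have cv : elt c != v by apply/eqP => e; rewrite e in cS; by move: (vS F); rewrite cS.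
have du : elt d' != u by apply/eqP => e; move: dS; rewrite e !inE eqxx.
have dv : elt d' != v by apply/eqP => e; rewrite e (negbTE vE) in dE.
have cF : elt c \in F by move: cS; rewrite !inE (negbTE cu) /= => /andP [_ ->].
have dF : elt d' \notin F by apply: contra dS => dF; rewrite !inE dv dF orbT.
have cd : c != d' by apply/eqP => e; rewrite e (negbTE dF) in cF.
case: (ltngtP c d') => [lt|lt|e]; last by case/eqP: cd; apply: val_inj.
- have nh : ~ (elt c = u /\ elt d' = v) by case=> e _; move/eqP: cu.
  have E'A := shift_fixed (H _ _ _ lt nh) EA.
  have eE' : shift_set c d' E = exch c d' E by rewrite shift_setE (negbTE cE) dE.
  have vE' : v \notin shift_set c d' E.
    by rewrite eE' /exch !inE (eq_sym v) (negbTE cv) (negbTE vE) andbF.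
  apply: (IH #|F :\: shift_set c d' E|) => //; rewrite -ed; apply: proper_card.
  apply/properP; split.
  + apply/subsetP => z; rewrite eE' /exch !inE negb_or => /andP [/andP [zc zE'] zF].
    rewrite zF andbT; apply/negP => zE; move: zE'; rewrite zE andbT negbK => /eqP ez.
    by rewrite -ez zF in dF.
  + exists (elt c); first by rewrite !inE cE cF.
    by rewrite eE' /exch !inE eqxx.
- have nh : ~ (elt d' = u /\ elt c = v) by case=> e _; move/eqP: du.
  have F'A := shift_fixed (H _ _ _ lt nh) FA.
  have eF' : shift_set d' c F = exch d' c F by rewrite shift_setE (negbTE dF) cF.
  have uF' : u \notin shift_set d' c F.
    by rewrite eF' /exch !inE (eq_sym u) (negbTE du) (negbTE uF) andbF.
  apply: (IH #|shift_set d' c F :\: E|) => //; rewrite -ed; apply: proper_card.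
  apply/properP; split.
  + apply/subsetP => z; rewrite eF' /exch !inE => /andP [zE /orP [/eqP ez|/andP [_ zF]]].
      by rewrite ez dE in zE.
    by rewrite zE zF.
  + exists (elt c); first by rewrite !inE cE cF.
    by rewrite eF' /exch !inE eqxx (inj_eq (@elt_inj s')) (negbTE cd) /= ?andbF.
Qed.

Lemma main_ind : forall m (A : {set {set G}}), pot A = m -> max_nontriv k A -> meets u v A ->
  exists A' : {set {set G}}, max_nontriv k A' /\ shifted A'.
Proof.
elim/ltn_ind => m IH A em MA M.
apply: NNPP => ng.
have key : forall s (a b : 'I_(n s)), a < b -> shift_fam a b A != A ->
    trivially_intersecting (shift_fam a b A).
  move=> s a b lt ne; apply: NNPP => nt; apply: ng.
  case: (MA) => FP [IA NT] MX.
  apply: (IH (pot (shift_fam a b A))); first by rewrite -em; exact: pot_shift.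
  - by [].
  - split; [exact: fam_prod_shift | split; [exact: inter_shift | exact: nt] | ].
    by move=> B FB NB; rewrite card_shift; apply: MX.
  - exact: meets_shift.
have H1 : forall s (a b : 'I_(n s)), a < b -> ~ (elt a = u /\ elt b = v) -> shift_fam a b A = A.
  move=> s a b lt nuv; apply/eqP; apply/negPn/negP => ne.
  exact: (nontriv_shift MA M lt nuv ne (key _ _ _ lt ne)).
apply: ng; exists A; split => // s a b lt.
case: (eqVneq (shift_fam a b A) A) => // ne.
case: (classic (elt a = u /\ elt b = v)) => [[ea eb]|nuv]; last exact: H1.
by case: (last_case MA M H1 ea eb); apply: key.
Qed.

End Main.
End Basics.

Theorem lemma2p3 (p : nat) (n : 'I_p -> nat) (k : 'I_p -> nat) :
  1 <= p ->
  (forall s, 1 <= n s) ->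
  (forall s, 1 <= k s <= n s) ->
  (exists (A : {set {set ground n}}) (Q : {set 'I_p}),
      [/\ max_nontriv k A, Q \proper [set: 'I_p], Q_shifted Q A &
          exists t, t \notin Q /\ 1 < k t]) ->
  exists A' : {set {set ground n}}, max_nontriv k A' /\ shifted A'.
Proof.
move=> _ _ kn [A [Q [MA _ [_ _ HQ] [t [tQ kt]]]]].
have kn' : forall s, k s <= n s by move=> s; case/andP: (kn s).
have [i [j [lt [x Hx]]]] := HQ t tQ.
have MA' := MA; case: MA' => FP [IA NTA] MX.
have [ex Hi _] := triv_shift NTA Hx.
have Mij : meets (elt i) (elt j) A.
  move=> F FA; case: (eqVneq (shift_set i j F) F) => [e|/shift_set_ne [_ jF _]].
    by move: (Hi F FA); rewrite e => ->.
  by rewrite jF orbT.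
have jpos : 0 < j by apply: leq_ltn_trans lt.
have n1t : 1 < n t by apply: (leq_ltn_trans jpos (ltn_ord j)).
pose o0 : 'I_(n t) := Ordinal (ltnW n1t).
pose o1 : 'I_(n t) := Ordinal n1t.
have ij : elt i != elt j by apply/eqP => /elt_inj e; rewrite e ltnn in lt.
have j0 : elt o0 != elt j.
  by apply/eqP => /elt_inj /(congr1 val) /= e; rewrite -e in jpos.
have j1 : elt o1 != elt o0.
  by apply/eqP => /elt_inj /(congr1 val).
have MA1 := max_pi i o0 MA.
have M1 : meets (elt o0) (elt j) (piA i o0 A).
  by have := meets_pi (a := i) (b := o0) Mij; rewrite tpermL tpermD.
have MA2 := max_pi j o1 MA1.
have M2 : meets (elt o0) (elt o1) (piA j o1 (piA i o0 A)).
  have := meets_pi (a := j) (b := o1) M1; rewrite tpermL tpermD //.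
  by rewrite eq_sym.
exact: (main_ind (o0 := o0) (o1 := o1) erefl erefl kt kn' erefl MA2 M2).
Qed.
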